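(* Let $A$ be a synaptic algebra, let $p,q\in P$, and define $p_r:=p\wedge(p^{\perp}\vee q)\wedge(p^{\perp}\vee q^{\perp})\in P$. Then: (i) $p=((p\wedge q)\vee(p\wedge q^{\perp}))\oplus p_r=(p\wedge q)\vee(p\wedge q^{\perp})\vee p_r=(p\wedge q)\oplus(p\wedge q^{\perp})\oplus p_r$; (ii) $0\le p_r\le p$ and $p-p_r=(p\wedge q)\vee(p\wedge q^{\perp})$; (iii) $pCq$ iff $p_r=0$.
   Context: Synaptic algebra (Foulis): $R$ is a real linear associative algebra with unit $1$, and $A\subseteq R$ is a real linear subspace with $1\in A$. For $a,b\in A$ write $aCb$ iff $ab=ba$; $C(a):=\{b\in A: aCb\}$; $CC(a):=\{b\in A: bCd \text{ for all } d\in C(a)\}$. $A$ is a synaptic algebra with enveloping algebra $R$ iff: (SA1) $A$ is a partially ordered archimedean real linear space with positive cone $A^+$, $1$ is an order unit, $\|\cdot\|$ the order-unit norm; (SA2) $a\in A\Rightarrow a^2\in A^+$; (SA3) $a,b\in A^+\Rightarrow aba\in A^+$; (SA4) if $a\in A$, $b\in A^+$, $aba=0$ then $ab=ba=0$; (SA5) if $a\in A^+$ there is $b\in A^+\cap CC(a)$ with $b^2=a$; (SA6) for $a\in A$ there is $p=p^2\in A$ with $ab=0\Leftrightarrow pb=0$ for all $b\in A$; (SA7) if $1\le a$ there is $b\in A$ with $ab=ba=1$; (SA8) if $a,b\in A$, $a_1\le a_2\le\cdots$ are pairwise commuting elements of $C(b)$ with $\|a-a_n\|\to0$, then $a\in C(b)$.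 $A$ is nondegenerate ($1\neq 0$). $P:=\{p\in A:p=p^2\}$ with the order inherited from $A$ is an orthomodular lattice with orthocomplement $p^{\perp}:=1-p$, meet $\wedge$, join $\vee$. Projections $p,q$ are orthogonal iff $p\le q^{\perp}$, and then $p\oplus q:=p+q$ (orthosum). *)

(* Defs.v *)
From mathcomp Require Import all_boot all_order all_algebra.
From mathcomp Require Import reals.
Set Implicit Arguments. Unset Strict Implicit. Unset Printing Implicit Defensive.
Import Order.TTheory GRing.Theory Num.Theory.
Local Open Scope ring_scope.

Section Synaptic.
Variables (R : realType) (E : algType R).
Variables (A Apos : {pred E}).

Definition sle (a b : E) : Prop := (b - a) \in Apos.

Definition scomm (a b : E) : Prop := a * b = b * a.

Definition in_CC (a b : E) : Prop :=
  b \in A /\ forall d, d \in A -> scomm a d -> scomm b d.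

(* order-unit-norm convergence  || a - s n || -> 0 , unfolded:
   for every eps > 0, eventually  -eps*1 <= a - s n <= eps*1 *)
Definition ou_conv (s : nat -> E) (a : E) : Prop :=
  forall eps : R, 0 < eps -> exists N : nat, forall n : nat, (N <= n)%N ->
    sle (- (eps *: 1)) (a - s n) /\ sle (a - s n) (eps *: 1).

Record synaptic : Prop := {
  sa_lin : forall (c : R) a b, a \in A -> b \in A -> c *: a + b \in A;
  sa_one : (1 : E) \in A;
  sa_pos_sub : forall a, a \in Apos -> a \in A;
  sa_pos0 : (0 : E) \in Apos;
  sa_posD : forall a b, a \in Apos -> b \in Apos -> a + b \in Apos;
  sa_posZ : forall (c : R) a, 0 <= c -> a \in Apos -> c *: a \in Apos;
  sa_pos_antisym : forall a, a \in Apos -> - a \in Apos -> a = 0;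
  sa_archimedean : forall a b, a \in A -> b \in A ->
      (forall n : nat, sle (n%:R *: a) b) -> sle a 0;
  sa_order_unit : forall a, a \in A ->
      exists n : nat, sle (- (n%:R *: 1)) a /\ sle a (n%:R *: 1);
  sa2 : forall a, a \in A -> a * a \in Apos;
  sa3 : forall a b, a \in Apos -> b \in Apos -> a * b * a \in Apos;
  sa4 : forall a b, a \in A -> b \in Apos -> a * b * a = 0 ->
      a * b = 0 /\ b * a = 0;
  sa5 : forall a, a \in Apos ->
      exists b, [/\ b \in Apos, in_CC a b & b * b = a];
  sa6 : forall a, a \in A ->
      exists p, [/\ p \in A, p * p = p &
                 forall b, b \in A -> (a * b = 0 <-> p * b = 0)];
  sa7 : forall a, a \in A -> sle 1 a ->
      exists b, [/\ b \in A, a * b = 1 & b * a = 1];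
  sa8 : forall (a b : E) (s : nat -> E), a \in A -> b \in A ->
      (forall n, s n \in A) ->
      (forall n, sle (s n) (s n.+1)) ->
      (forall n m, scomm (s n) (s m)) ->
      (forall n, scomm (s n) b) ->
      ou_conv s a -> scomm a b;
  sa_nondeg : (1 : E) != 0
}.

Definition proj (p : E) : Prop := p \in A /\ p * p = p.

Definition perpP (p : E) : E := 1 - p.

Definition is_meetP (p q r : E) : Prop :=
  [/\ proj r, sle r p, sle r q &
      forall s, proj s -> sle s p -> sle s q -> sle s r].

Definition is_joinP (p q r : E) : Prop :=
  [/\ proj r, sle p r, sle q r &
      forall s, proj s -> sle p s -> sle q s -> sle r s].

Definition orthP (p q : E) : Prop := sle p (perpP q).

End Synaptic.

(* Main.v *)
Require Import Defs.
From mathcomp Require Import all_boot all_order all_algebra.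
From mathcomp Require Import reals.
Import Order.TTheory GRing.Theory Num.Theory.
Local Open Scope ring_scope.
Set Implicit Arguments. Unset Strict Implicit. Unset Printing Implicit Defensive.

Lemma inA_sub (R : realType) (E : algType R) (A Apos : {pred E})
  (HA : synaptic A Apos) (a b : E) : a \in A -> b \in A -> a - b \in A.
Proof. move=> Ha Hb; have := sa_lin HA (-1) Hb Ha. by rewrite scaleN1r addrC. Qed.

Lemma inA_add (R : realType) (E : algType R) (A Apos : {pred E})
  (HA : synaptic A Apos) (a b : E) : a \in A -> b \in A -> a + b \in A.
Proof. move=> Ha Hb; have := sa_lin HA 1 Ha Hb. by rewrite scale1r. Qed.

Lemma proj_pos (R : realType) (E : algType R) (A Apos : {pred E})
  (HA : synaptic A Apos) (p : E) : proj A p -> p \in Apos.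
Proof. case=> H1 H2; have := sa2 HA H1. by rewrite H2. Qed.

Lemma proj_compl (R : realType) (E : algType R) (A Apos : {pred E})
  (HA : synaptic A Apos) (p : E) : proj A p -> proj A (1 - p).
Proof.
case=> H1 H2; split; first exact: (inA_sub HA (sa_one HA) H1).
by rewrite !(mulrBl, mulrBr, mul1r, mulr1) H2 subrr subr0.
Qed.

Lemma sle_antisym (R : realType) (E : algType R) (A Apos : {pred E})
  (HA : synaptic A Apos) (a b : E) : sle Apos a b -> sle Apos b a -> a = b.
Proof.
rewrite /sle => H1 H2. apply/esym/subr0_eq/(sa_pos_antisym HA H1).
by rewrite opprB.
Qed.

Lemma le_absorb (R : realType) (E : algType R) (A Apos : {pred E})
  (HA : synaptic A Apos) (e f : E) : proj A e -> proj A f -> sle Apos e f ->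
  f * e = e /\ e * f = e.
Proof.
move=> He Hf Hef.
have Hf' := proj_compl HA Hf.
have X := sa3 HA (proj_pos HA Hf') Hef.
have Y := sa3 HA (proj_pos HA Hf') (proj_pos HA He).
have Z : (1 - f) * e * (1 - f) = 0.
  apply: (@sa_pos_antisym _ _ _ _ HA _ Y).
  suff -> : - ((1 - f) * e * (1 - f)) = (1 - f) * (f - e) * (1 - f) by [].
  rewrite [(1 - f) * (f - e)]mulrBr [(1-f) * f]mulrBl mul1r Hf.2 subrr sub0r.
  by rewrite mulNr.
have [Z1 Z2] := sa4 HA Hf'.1 (proj_pos HA He) Z.
split.
  by apply/esym/subr0_eq; rewrite -Z1 mulrBl mul1r.
by apply/esym/subr0_eq; rewrite -Z2 mulrBr mulr1.
Qed.

Lemma absorb_le (R : realType) (E : algType R) (A Apos : {pred E})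
  (HA : synaptic A Apos) (e f : E) : proj A e -> proj A f ->
  f * e = e -> e * f = e -> sle Apos e f.
Proof.
move=> He Hf H1 H2; apply: (proj_pos HA); split.
  exact: (inA_sub HA Hf.1 He.1).
rewrite mulrBl !mulrBr Hf.2 He.2 H1 H2.
by rewrite opprB subrr addr0.
Qed.

Lemma sle_compl (R : realType) (E : algType R) (Apos : {pred E}) (a b : E) :
  sle Apos a b -> sle Apos (1 - b) (1 - a).
Proof. rewrite /sle => H; suff -> : (1 - a) - (1 - b) = b - a by [].
by rewrite opprB addrC subrKA. Qed.

Lemma meet_uniq (R : realType) (E : algType R) (A Apos : {pred E})
  (HA : synaptic A Apos) (a b r r' : E) :
  is_meetP A Apos a b r -> is_meetP A Apos a b r' -> r = r'.
Proof.
case=> H1 H2 H3 H4 [G1 G2 G3 G4].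
exact: (sle_antisym HA (G4 r H1 H2 H3) (H4 r' G1 G2 G3)).
Qed.

Lemma join_compl (R : realType) (E : algType R) (A Apos : {pred E})
  (HA : synaptic A Apos) (a b r : E) :
  is_joinP A Apos a b r -> is_meetP A Apos (1 - a) (1 - b) (1 - r).
Proof.
case=> H1 H2 H3 H4; split.
- exact: (proj_compl HA H1).
- exact: sle_compl.
- exact: sle_compl.
move=> s Hs Hsa Hsb.
have := sle_compl (H4 (1 - s) (proj_compl HA Hs) _ _).
rewrite subKr; apply.
  by have := sle_compl Hsa; rewrite subKr.
by have := sle_compl Hsb; rewrite subKr.
Qed.

Lemma meet_comm (R : realType) (E : algType R) (A Apos : {pred E})
  (HA : synaptic A Apos) (a b c : E) : proj A a -> proj A b -> c \in A ->
  a * b = c -> b * a = c -> proj A c /\ is_meetP A Apos a b c.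
Proof.
move=> Ha Hb Hc Hab Hba.
have ca : c * a = c by rewrite -Hba -mulrA Ha.2.
have ac : a * c = c by rewrite -Hab mulrA Ha.2.
have cb : c * b = c by rewrite -Hab -mulrA Hb.2.
have bc : b * c = c by rewrite -Hba mulrA Hb.2.
have Pc : proj A c by split=> //; rewrite -{1}Hab -mulrA bc ac.
split=> //; split=> //.
- exact: (absorb_le HA Pc Ha).
- exact: (absorb_le HA Pc Hb).
move=> s Hs Hsa Hsb.
have [as_ sa] := le_absorb HA Hs Ha Hsa.
have [bs sb] := le_absorb HA Hs Hb Hsb.
apply: (absorb_le HA Hs Pc).
  by rewrite -Hab -mulrA bs as_.
by rewrite -Hba mulrA sb sa.
Qed.

Lemma addid (R : realType) (E : algType R) (x y z : E) : x - (y + z) = x - z - y.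
Proof. by rewrite opprD addrA addrAC. Qed.

Lemma sub_self0 (R : realType) (E : algType R) (x y : E) : x - y = x -> y = 0.
Proof. by move=> H; rewrite -(subKr x y) H subrr. Qed.

Lemma sub1_inj (R : realType) (E : algType R) (x y : E) : 1 - x = 1 - y -> x = y.
Proof. by move=> H; apply: oppr_inj; apply: (addrI 1). Qed.

Lemma comm_inA (R : realType) (E : algType R) (A Apos : {pred E})
  (HA : synaptic A Apos) (p q : E) : proj A p -> proj A q -> p * q = q * p ->
  p * q \in A.
Proof.
move=> Hp Hq Hc.
have Hs : p + q \in A := inA_add HA Hp.1 Hq.1.
have Hx : (p + q) * (p + q) - (p + q) = p * q + p * q.
  rewrite mulrDr !mulrDl Hp.2 Hq.2 -Hc [p * q + q]addrC addrACA.
  by rewrite [_ - (p + q)]addrC addKr.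
have H0 : (0 : E) \in A := sa_pos_sub HA (sa_pos0 HA).
have := sa_lin HA (2^-1) (inA_sub HA (sa_pos_sub HA (sa2 HA Hs)) Hs) H0.
rewrite addr0 Hx -mulr2n -scaler_nat scalerA mulVf ?scale1r //.
by rewrite pnatr_eq0.
Qed.

Unset Implicit Arguments.
Theorem theorem2p2 (R : realType) (E : algType R) (A Apos : {pred E})
  (HA : synaptic A Apos)
  (p q pq pqc j u v w pr k : E)
  (Hp : proj A p) (Hq : proj A q)
  (Hpq : is_meetP A Apos p q pq)                       (* pq  = p /\ q        *)
  (Hpqc : is_meetP A Apos p (perpP q) pqc)             (* pqc = p /\ q^perp   *)
  (Hj : is_joinP A Apos pq pqc j)                      (* j = pq \/ pqc       *)
  (Hu : is_joinP A Apos (perpP p) q u)                 (* u = p^perp \/ q     *)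
  (Hv : is_joinP A Apos (perpP p) (perpP q) v)         (* v = p^perp \/ q^perp *)
  (Hw : is_meetP A Apos p u w)                         (* w = p /\ u          *)
  (Hpr : is_meetP A Apos w v pr)                       (* p_r = w /\ v        *)
  (Hk : is_joinP A Apos j pr k) :                      (* k = j \/ p_r        *)
  (* (i) *)
  ((orthP Apos j pr /\ p = j + pr) /\
   p = k /\
   (orthP Apos pq pqc /\ orthP Apos (pq + pqc) pr /\ p = pq + pqc + pr))
  /\
  (* (ii) *)
  ((sle Apos 0 pr /\ sle Apos pr p) /\ p - pr = j)
  /\
  (* (iii) *)
  (scomm p q <-> pr = 0).

Proof.
have [Hpq1 Hpq2 Hpq3 Hpq4] := Hpq.
have Hpqc' := Hpqc; move: Hpqc' => [Hpqc1 Hpqc2 Hpqc3 Hpqc4].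
rewrite /perpP in Hpqc Hpqc3 Hpqc4 Hu Hv.
have Hqc := proj_compl HA Hq.
have [ppq pqp] := le_absorb HA Hpq1 Hp Hpq2.
have [qpq pqq] := le_absorb HA Hpq1 Hq Hpq3.
have [ppqc pqcp] := le_absorb HA Hpqc1 Hp Hpqc2.
have [qcpqc pqcqc] := le_absorb HA Hpqc1 Hqc Hpqc3.
have qpqc : q * pqc = 0.
  by apply: (sub_self0 (x := pqc)); rewrite -[RHS]qcpqc mulrBl mul1r.
have pqcq : pqc * q = 0.
  by apply: (sub_self0 (x := pqc)); rewrite -[RHS]pqcqc mulrBr mulr1.
have pqpqc : pq * pqc = 0 by rewrite -{1}pqq -mulrA qpqc mulr0.
have pqcpq : pqc * pq = 0 by rewrite -{1}qpq mulrA pqcq mul0r.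
have Eu : u = 1 - pqc.
  have := join_compl HA Hu; rewrite subKr => H.
  by apply: sub1_inj; rewrite subKr; apply: (meet_uniq HA H Hpqc).
have Ev : v = 1 - pq.
  have := join_compl HA Hv; rewrite subKr subKr => H.
  by apply: sub1_inj; rewrite subKr; apply: (meet_uniq HA H Hpq).
have Ej : j = pq + pqc.
  have H := join_compl HA Hj.
  have E1 : (1 - pq) * (1 - pqc) = 1 - (pq + pqc).
    by rewrite mulrBl mul1r mulrBr mulr1 pqpqc subr0 addid.
  have E2 : (1 - pqc) * (1 - pq) = 1 - (pq + pqc).
    by rewrite mulrBl mul1r mulrBr mulr1 pqcpq subr0 addid addrAC.
  have [_ H'] := meet_comm HA (proj_compl HA Hpq1) (proj_compl HA Hpqc1)
     (inA_sub HA (sa_one HA) (inA_add HA Hpq1.1 Hpqc1.1)) E1 E2.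
  by apply: sub1_inj; apply: (meet_uniq HA H H').
have Ew : w = p - pqc.
  have E1 : p * (1 - pqc) = p - pqc by rewrite mulrBr mulr1 ppqc.
  have E2 : (1 - pqc) * p = p - pqc by rewrite mulrBl mul1r pqcp.
  have [_ H'] := meet_comm HA Hp (proj_compl HA Hpqc1)
     (inA_sub HA Hp.1 Hpqc1.1) E1 E2.
  rewrite Eu in Hw.
  exact: (meet_uniq HA Hw H').
have Epr : pr = p - j.
  have E1 : (p - pqc) * (1 - pq) = p - (pq + pqc).
    by rewrite mulrBr mulr1 mulrBl ppq pqcpq subr0 addid.
  have E2 : (1 - pq) * (p - pqc) = p - (pq + pqc).
    by rewrite mulrBl mul1r mulrBr pqp pqpqc subr0 addid.
  have Hwp : proj A (p - pqc).
    have E3 : p * (1 - pqc) = p - pqc by rewrite mulrBr mulr1 ppqc.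
    have E4 : (1 - pqc) * p = p - pqc by rewrite mulrBl mul1r pqcp.
    by have [] := meet_comm HA Hp (proj_compl HA Hpqc1)
     (inA_sub HA Hp.1 Hpqc1.1) E3 E4.
  have [_ H'] := meet_comm HA Hwp (proj_compl HA Hpq1)
     (inA_sub HA Hp.1 (inA_add HA Hpq1.1 Hpqc1.1)) E1 E2.
  rewrite Ew Ev in Hpr.
  by rewrite Ej; exact: (meet_uniq HA Hpr H').
have Eprj : p = j + pr by rewrite Epr subrKC.
have Hjproj : proj A j by case: Hj.
have Hprproj : proj A pr by case: Hpr.
have jp : j * p = j by rewrite Ej mulrDl pqp pqcp.
have pj : p * j = j by rewrite Ej mulrDr ppq ppqc.
have jpr : j * pr = 0 by rewrite Epr mulrBr jp Hjproj.2 subrr.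
have prj : pr * j = 0 by rewrite Epr mulrBl pj Hjproj.2 subrr.
have Ek : k = p.
  have H := join_compl HA Hk.
  have E1 : (1 - j) * (1 - pr) = 1 - p.
    by rewrite mulrBl mul1r mulrBr mulr1 jpr subr0 -addid -Eprj.
  have E2 : (1 - pr) * (1 - j) = 1 - p.
    by rewrite mulrBl mul1r mulrBr mulr1 prj subr0 -addid [pr + j]addrC -Eprj.
  have [_ H'] := meet_comm HA (proj_compl HA Hjproj) (proj_compl HA Hprproj)
     (inA_sub HA (sa_one HA) Hp.1) E1 E2.
  by apply: sub1_inj; apply: (meet_uniq HA H H').
have Hpj : p - pr = j by rewrite {1}Eprj addrK.
have Ojpr : orthP Apos j pr.
  rewrite /orthP /sle /perpP -addid -Eprj.
  exact: (proj_pos HA (proj_compl HA Hp)).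
split.
  split; first by split.
  split; first by [].
  split.
    rewrite /orthP /sle /perpP -addid -Ej.
    exact: (proj_pos HA (proj_compl HA Hjproj)).
  by rewrite -Ej.
split.
  split=> //; split.
    by rewrite /sle subr0; exact: (proj_pos HA Hprproj).
  by rewrite /sle Hpj; exact: (proj_pos HA Hjproj).
split.
  move=> Hc.
  have Hin := comm_inA HA Hp Hq Hc.
  have [_ M1] := meet_comm HA Hp Hq Hin erefl (esym Hc).
  have E1 : p * (1 - q) = p - p * q by rewrite mulrBr mulr1.
  have E2 : (1 - q) * p = p - p * q by rewrite mulrBl mul1r Hc.
  have [_ M2] := meet_comm HA Hp Hqc (inA_sub HA Hp.1 Hin) E1 E2.
  rewrite Epr Ej.
  have -> : pq = p * q by exact: (meet_uniq HA Hpq M1).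
  have -> : pqc = p - p * q by exact: (meet_uniq HA Hpqc M2).
  by rewrite subrKC subrr.
move=> H0.
have Ep : p = pq + pqc by rewrite Eprj H0 addr0 Ej.
by rewrite /scomm Ep mulrDl mulrDr pqq pqcq qpq qpqc.
Qed.
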